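(* Let $n\ge 3$ and let $DW_n$ be the double wheel graph. Then $$\chi'(DW_n)=\begin{cases}3(n+1) & \text{if } n \text{ is even},\\ 3n+7 & \text{if } n \text{ is odd}.\end{cases}$$
   Context: The double wheel graph $DW_n=2C_n+K_1$ is obtained from the disjoint union of two cycles $C_n$ by adding one new vertex adjacent to every vertex of both cycles. For a proper colouring $c:V(G)\to\{1,\dots,k\}$ of a graph $G$ (colour $c_i$ identified with the integer $i$), its colouring sum is $\sum_{i=1}^k i\,\theta(c_i)=\sum_{v\in V(G)} c(v)$, where $\theta(c_i)$ is the number of vertices receiving colour $c_i$. The $\chi$-chromatic sum $\chi'(G)$ is the minimum of the colouring sum over all proper colourings of $G$ using exactly $\chi(G)$ colours (the chromatic number), i.e. over all proper colourings $c:V(G)\to\{1,\dots,\chi(G)\}$. *)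

(* Defs.v *)
From mathcomp Require Import all_boot.
Set Implicit Arguments. Unset Strict Implicit. Unset Printing Implicit Defensive.

(* A proper k-colouring is c : T -> 'I_k with c x != c y on every edge;
   colour c_i is identified with the integer i, i.e. ordinal value i-1
   corresponds to colour (i-1).+1 = i. *)
Definition proper_col (T : finType) (e : rel T) (k : nat) (c : {ffun T -> 'I_k}) : bool :=
  [forall x, forall y, e x y ==> (c x != c y)].

Lemma proper_col_exists (T : finType) (e : rel T) (He : irreflexive e) :
  exists k, [exists c : {ffun T -> 'I_k}, proper_col e c].
Proof.
exists #|T|; apply/existsP; exists [ffun x => enum_rank x].
apply/forallP => x; apply/forallP => y; apply/implyP => exy.
rewrite !ffunE; apply/negP => /eqP /enum_rank_inj exy'.
by move: exy; rewrite exy' He.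
Qed.

Definition chromatic_number (T : finType) (e : rel T) (He : irreflexive e) : nat :=
  ex_minn (proper_col_exists He).

Lemma chi_col_exists (T : finType) (e : rel T) (He : irreflexive e) :
  exists s, [exists c : {ffun T -> 'I_(chromatic_number He)},
               proper_col e c && (s == \sum_(v : T) (c v).+1)].
Proof.
rewrite /chromatic_number; case: ex_minnP => k /existsP [c Hc] _.
exists (\sum_(v : T) (c v).+1); apply/existsP; exists c; by rewrite Hc eqxx.
Qed.

Definition chi_chromatic_sum (T : finType) (e : rel T) (He : irreflexive e) : nat :=
  ex_minn (chi_col_exists He).

(* Double wheel DW_n = 2C_n + K_1: vertices None (the hub) and Some (b, i),
   b : bool choosing one of the two cycles, i : 'I_n the position on it.
   Cycle edges join i and i+1 (mod n); the extra (i != j) guard only matters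
   for the degenerate n = 1 and makes the relation irreflexive for all n. *)
Definition dw_adj (n : nat) : rel (option (bool * 'I_n)) :=
  fun x y =>
    match x, y with
    | None, None => false
    | None, Some _ => true
    | Some _, None => true
    | Some (b, i), Some (b', j) =>
        [&& b == b', i != j &
            ((nat_of_ord j == i.+1 %% n) || (nat_of_ord i == j.+1 %% n))]
    end.
Arguments dw_adj n : clear implicits.

Lemma dw_adj_irr (n : nat) : irreflexive (dw_adj n).
Proof. move=> [[b i]|] //=; by rewrite !eqxx. Qed.
Arguments dw_adj_irr n : clear implicits.

(* Main.v *)
Require Import Defs.
From mathcomp Require Import all_boot.
From mathcomp Require Import zify.
Set Implicit Arguments. Unset Strict Implicit.

Ltac slia := repeat match goal with
  | H : is_true (proper_col _ _) |- _ => clear H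
  | H : _ \/ _ |- _ => clear H
  end; lia.

Lemma big_opt (X : finType) (F : option X -> nat) :
  \sum_(v : option X) F v = F None + \sum_(x : X) F (Some x).
Proof.
rewrite (bigD1 None) //=; congr (_ + _).
rewrite (reindex_omap Some id) => [|[]//].
by apply: eq_bigl => x /=; rewrite eqxx.
Qed.

Lemma big_dw n (F : option (bool * 'I_n) -> nat) :
  \sum_v F v = F None + (\sum_(i < n) F (Some (true, i)) + \sum_(i < n) F (Some (false, i))).
Proof.
rewrite big_opt; congr (_ + _).
have := @pair_big nat 0 addn _ _ xpredT xpredT (fun b (i:'I_n) => F (Some (b,i))).
rewrite /= => H.
have := @big_bool nat 0 addn (fun b => \sum_(i<n) F (Some (b,i))).
rewrite H => <-. by apply: eq_bigr => -[].
Qed.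

Lemma ordS_val n (i : 'I_n) : nat_of_ord (ordS i) = if i.+1 < n then i.+1 else 0.
Proof.
rewrite /=; case: ltngtP => [lt|gt|eq]; first by rewrite modn_small.
- by have := ltn_ord i; slia.
- by rewrite eq modnn.
Qed.

Lemma ordS_neq n (i : 'I_n) : 1 < n -> i != ordS i.
Proof.
move=> n1; apply/eqP => /(congr1 val) /=.
case: (ltngtP i.+1 n) => [lt|gt|eq].
- rewrite modn_small //; slia.
- have := ltn_ord i; slia.
- rewrite eq modnn; slia.
Qed.

Lemma proper_hub n k (c : {ffun option (bool * 'I_n) -> 'I_k}) :
  proper_col (dw_adj n) c -> forall b i, (c (Some (b,i)) : nat) != c None.
Proof.
move=> /forallP H b i.
by have /forallP/(_ None)/implyP/(_ isT) := H (Some (b,i)).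
Qed.

Lemma proper_cyc n k (c : {ffun option (bool * 'I_n) -> 'I_k}) :
  1 < n -> proper_col (dw_adj n) c ->
  forall b i, (c (Some (b,i)) : nat) != c (Some (b, ordS i)).
Proof.
move=> n1 /forallP H b i.
have /forallP/(_ (Some (b, ordS i)))/implyP := H (Some (b,i)).
apply; by rewrite /= eqxx ordS_neq //= eqxx.
Qed.

Lemma cyc_sum n (f : 'I_n -> nat) (W : nat -> nat) :
  (forall i, W (f i) + W (f (ordS i)) <= 2 * (f i + f (ordS i))) ->
  \sum_i W (f i) <= 2 * \sum_i f i.
Proof.
move=> H.
have E (g : 'I_n -> nat) : \sum_i g (ordS i) = \sum_i g i.
  by rewrite [RHS](reindex_inj (@ordS_inj n)).
suff : 2 * \sum_i W (f i) <= 2 * (2 * \sum_i f i) by rewrite leq_pmul2l.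
have -> : 2 * \sum_i W (f i) = \sum_i (W (f i) + W (f (ordS i))).
  have E1 : \sum_i W (f (ordS i)) = \sum_i W (f i) := E (fun i => W (f i)).
  by rewrite big_split /= E1 mul2n -addnn.
have -> : 2 * (2 * \sum_i f i) = \sum_i 2 * (f i + f (ordS i)).
  rewrite -big_distrr big_split /= E; congr (_ * _); by rewrite mul2n -addnn.
by apply: leq_sum.
Qed.

Lemma sumW n (f : 'I_n -> nat) (base bonus s : nat) i0 :
  f i0 = s -> n * base + bonus <= \sum_i (base + bonus * (f i == s)).
Proof.
move=> Hi; rewrite big_split /= sum_nat_const card_ord leq_add2l.
by rewrite (bigD1 i0) //= Hi eqxx muln1 leq_addr.
Qed.

Lemma cyc_lb n (f : 'I_n -> nat) (base bonus s : nat) :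
  (forall i, base + bonus * (f i == s) + (base + bonus * (f (ordS i) == s))
             <= 2 * (f i + f (ordS i))) ->
  (exists i, f i = s) -> n * base + bonus <= 2 * \sum_i f i.
Proof.
move=> H [i0 Hi]; apply: leq_trans (@sumW n f base bonus s i0 Hi) _.
exact: (@cyc_sum n f (fun x => base + bonus * (x == s)) H).
Qed.

Lemma two_val (p q x y : nat) : (x == p) || (x == q) -> (y == p) || (y == q) ->
  x != y -> (y == p) = ~~ (x == p).
Proof.
by case/orP=> /eqP-> /orP[] /eqP->; rewrite ?eqxx // => /negbTE; rewrite eq_sym => ->.
Qed.

Lemma odd_cyc n (f : 'I_n -> nat) (p q : nat) : odd n ->
  (forall i, f i != f (ordS i)) -> (forall i, (f i == p) || (f i == q)) -> False.
Proof.
case: n f => [//|n] f Ho Hadj Hall.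
have Hs m : m < n -> ordS (inord m : 'I_n.+1) = inord m.+1.
  move=> lt; apply: val_inj; rewrite /= !inordK; try slia.
  by rewrite modn_small.
have Hind m : m <= n -> (f (inord m) == p) = (f (inord 0) == p) (+) odd m.
  elim: m => [|m IH] lm; first by rewrite addbF.
  rewrite (@two_val p q _ _ (Hall (inord m)) (Hall (inord m.+1))); last first.
    by rewrite -Hs //; apply: Hadj.
  by rewrite IH ?(ltnW lm) //= addbN.
have e0 : ordS (inord n : 'I_n.+1) = inord 0.
  by apply: val_inj; rewrite /= !inordK ?modnn.
have on : odd n = false by move: Ho => /=; case: (odd n).
have := Hind n (leqnn n); rewrite on addbF => E.
have := @two_val p q _ _ (Hall (inord n)) (Hall (inord 0)).
rewrite -e0 => /(_ (Hadj _)); rewrite e0 E.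
by case: (_ == p).
Qed.

Lemma exists_s n (f : 'I_n -> nat) (p q s : nat) : odd n ->
  (forall i, f i != f (ordS i)) ->
  (forall i, f i != p -> f i != q -> f i = s) -> exists i, f i = s.
Proof.
move=> ho Hadj Hv.
case: (boolP [exists i, (f i != p) && (f i != q)]) => [/existsP[i /andP[h1 h2]]|/existsPn Hn].
  by exists i; apply: Hv.
exfalso; apply: (@odd_cyc n f p q ho Hadj) => i.
by have := Hn i; rewrite negb_and !negbK.
Qed.

Lemma three_vals h : h < 3 -> exists p q, forall x, x < 3 -> x != h -> (x == p) || (x == q).
Proof.
case: h => [|[|[|]]] // _; [exists 1, 2|exists 0, 2|exists 0, 1]; move=> x; slia.
Qed.

Lemma chi_lb3 n k (c : {ffun option (bool * 'I_n) -> 'I_k}) :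
  3 <= n -> proper_col (dw_adj n) c -> 3 <= k.
Proof.
move=> hn Hc.
have i0 : 'I_n := Ordinal (leq_trans (isT : 0 < 3) hn).
have := proper_hub Hc true i0; have := proper_hub Hc true (ordS i0).
have := proper_cyc (leq_trans (isT : 1 < 3) hn) Hc true i0.
have := ltn_ord (c None); have := ltn_ord (c (Some (true, i0))).
have := ltn_ord (c (Some (true, ordS i0))).
move: (c None) (c (Some (true, ordS i0))) (c (Some (true, i0))) => x y z.
slia.
Qed.

Lemma chi_lb4 n k (c : {ffun option (bool * 'I_n) -> 'I_k}) :
  3 <= n -> odd n -> proper_col (dw_adj n) c -> 4 <= k.
Proof.
move=> hn ho Hc.
have k3 := chi_lb3 hn Hc.
rewrite ltnNge; apply/negP => k4.
have hl : (c None : nat) < 3 by have := ltn_ord (c None); slia.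
have [p [q Hpq]] := three_vals hl.
apply: (@odd_cyc n (fun i => c (Some (true, i))) p q ho).
  exact: proper_cyc (leq_trans (isT : 1 < 3) hn) Hc true.
move=> i; apply: Hpq; last exact: proper_hub Hc true i.
by have := ltn_ord (c (Some (true, i))); slia.
Qed.

Lemma lb_gen n (hn : 3 <= n) k (c : {ffun option (bool * 'I_n) -> 'I_k})
  (Hc : proper_col (dw_adj n) c) (b : bool) (base bonus s p q : nat) :
  (forall x y, 0 < x <= k -> 0 < y <= k -> x != y -> x != (c None).+1 ->
     y != (c None).+1 -> base + bonus * (x == s) + (base + bonus * (y == s)) <= 2 * (x + y)) ->
  (odd n /\ (forall x, 0 < x <= k -> x != (c None).+1 -> x != p -> x != q -> x = s)
   \/ bonus = 0) ->
  n * base + bonus <= 2 * \sum_(i < n) (c (Some (b, i))).+1.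
Proof.
move=> Hxy Hex.
have n1 : 1 < n by slia.
have Hxy' s' : (bonus = 0 \/ s' = s) -> forall i,
   base + bonus * ((c (Some (b, i))).+1 == s') +
   (base + bonus * ((c (Some (b, ordS i))).+1 == s'))
   <= 2 * ((c (Some (b, i))).+1 + (c (Some (b, ordS i))).+1).
  move=> Hs' i.
  have -> : bonus * ((c (Some (b, i))).+1 == s') = bonus * ((c (Some (b, i))).+1 == s).
    by case: Hs' => ->; rewrite ?mul0n.
  have -> : bonus * ((c (Some (b, ordS i))).+1 == s') = bonus * ((c (Some (b, ordS i))).+1 == s).
    by case: Hs' => ->; rewrite ?mul0n.
  apply: Hxy.
  - by rewrite /= ltn_ord.
  - by rewrite /= ltn_ord.
  - by rewrite eqSS; apply: proper_cyc.
  - by rewrite eqSS; apply: proper_hub.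
  - by rewrite eqSS; apply: proper_hub.
case: Hex => [[ho Hv]|B0].
  apply: (cyc_lb (Hxy' s (or_intror erefl))).
  apply: (exists_s (p := p) (q := q) ho).
    by move=> i; rewrite eqSS; apply: proper_cyc.
  move=> i h1 h2; apply: Hv => //.
    by rewrite /= ltn_ord.
  by rewrite eqSS; apply: proper_hub.
have i0 : 'I_n := Ordinal (leq_trans (isT : 0 < 3) hn).
apply: (cyc_lb (Hxy' (c (Some (b, i0))).+1 (or_introl B0))).
by exists i0.
Qed.

Lemma lb_even n (hn : 3 <= n) (c : {ffun option (bool * 'I_n) -> 'I_3}) :
  proper_col (dw_adj n) c -> 3 * (n + 1) <= \sum_v (c v).+1.
Proof.
move=> Hc; rewrite big_dw.
have hl := ltn_ord (c None).
have Hb b := @lb_gen n hn 3 c Hc b (5 - c None) 0 0 0 0.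
have := Hb true; have := Hb false.
have H2 : forall x y, 0 < x <= 3 -> 0 < y <= 3 -> x != y -> x != (c None).+1 ->
     y != (c None).+1 -> 5 - c None + 0 * (x == 0) + (5 - c None + 0 * (y == 0)) <= 2 * (x + y).
  move=> x y; slia.
move=> /(_ H2 (or_intror erefl)) h1 /(_ H2 (or_intror erefl)) h2.
move: hl h1 h2; case: (nat_of_ord (c None)) => [|[|[|]]] //= _; slia.
Qed.

Lemma lb_odd n (hn : 3 <= n) (ho : odd n) (c : {ffun option (bool * 'I_n) -> 'I_4}) :
  proper_col (dw_adj n) c -> 3 * n + 7 <= \sum_v (c v).+1.
Proof.
move=> Hc; rewrite big_dw.
have hl := ltn_ord (c None).
have [m hodd] : exists m, n = m * 2 + 1.
  by exists n./2; rewrite -{1}(odd_double_half n) ho -muln2 addnC.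
have Hb b := @lb_gen n hn 4 c Hc b.
move: hl; case Eh: (nat_of_ord (c None)) => [|[|[|[|]]]] // _; rewrite Eh in Hb.
- have H2 : forall x y, 0 < x <= 4 -> 0 < y <= 4 -> x != y -> x != 1 ->
     y != 1 -> 5 + 0 * (x == 0) + (5 + 0 * (y == 0)) <= 2 * (x + y).
    move=> x y; slia.
  have h1 := Hb true 5 0 0 0 0 H2 (or_intror erefl).
  have h2 := Hb false 5 0 0 0 0 H2 (or_intror erefl).
  slia.
- have H2 : forall x y, 0 < x <= 4 -> 0 < y <= 4 -> x != y -> x != 2 ->
     y != 2 -> 4 + 2 * (x == 4) + (4 + 2 * (y == 4)) <= 2 * (x + y).
    move=> x y; slia.
  have Hv : odd n /\ (forall x, 0 < x <= 4 -> x != 2 -> x != 1 -> x != 3 -> x = 4).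
    by split => // x; slia.
  have h1 := Hb true 4 2 4 1 3 H2 (or_introl Hv).
  have h2 := Hb false 4 2 4 1 3 H2 (or_introl Hv).
  slia.
- have H2 : forall x y, 0 < x <= 4 -> 0 < y <= 4 -> x != y -> x != 3 ->
     y != 3 -> 3 + 4 * (x == 4) + (3 + 4 * (y == 4)) <= 2 * (x + y).
    move=> x y; slia.
  have Hv : odd n /\ (forall x, 0 < x <= 4 -> x != 3 -> x != 1 -> x != 2 -> x = 4).
    by split => // x; slia.
  have h1 := Hb true 3 4 4 1 2 H2 (or_introl Hv).
  have h2 := Hb false 3 4 4 1 2 H2 (or_introl Hv).
  slia.
- have H2 : forall x y, 0 < x <= 4 -> 0 < y <= 4 -> x != y -> x != 4 ->
     y != 4 -> 3 + 2 * (x == 3) + (3 + 2 * (y == 3)) <= 2 * (x + y).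
    move=> x y; slia.
  have Hv : odd n /\ (forall x, 0 < x <= 4 -> x != 4 -> x != 1 -> x != 2 -> x = 3).
    by split => // x; slia.
  have h1 := Hb true 3 2 3 1 2 H2 (or_introl Hv).
  have h2 := Hb false 3 2 3 1 2 H2 (or_introl Hv).
  slia.
Qed.

Lemma inord_neq k a b : a <= k -> b <= k -> a != b -> (inord a : 'I_k.+1) != inord b.
Proof.
move=> ha hb; apply: contra => /eqP /(congr1 val).
by rewrite /= !inordK // => ->.
Qed.

Lemma cyc_ok n (T : eqType) (g : nat -> T) (i j : 'I_n) :
  (forall m, m.+1 < n -> g m != g m.+1) -> g n.-1 != g 0 ->
  (nat_of_ord j == i.+1 %% n) || (nat_of_ord i == j.+1 %% n) -> g i != g j.
Proof.
move=> Hs Hl.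
have key (a b : 'I_n) : nat_of_ord b = a.+1 %% n -> g a != g b.
  move=> E; case: (ltngtP a.+1 n) E => [lt|gt|eq].
  - by rewrite modn_small // => ->; exact: Hs.
  - by have := ltn_ord a; slia.
  - rewrite eq modnn => ->.
    have -> : nat_of_ord a = n.-1 by slia.
    exact: Hl.
by case/orP => /eqP E; [exact: key | rewrite eq_sym; exact: key].
Qed.

Lemma proper_build n k (hub : 'I_k) (g : nat -> 'I_k) :
  (forall m, hub != g m) -> (forall m, m.+1 < n -> g m != g m.+1) -> g n.-1 != g 0 ->
  proper_col (dw_adj n) [ffun v => if v is Some (_, i) then g (nat_of_ord i) else hub].
Proof.
move=> Hh Hs Hl.
apply/forallP => -[[b i]|]; apply/forallP => -[[b' j]|]; rewrite !ffunE; apply/implyP.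
- by case/and3P => _ _ H; apply: (cyc_ok Hs Hl H).
- by move=> _; rewrite eq_sym.
- by move=> _.
- by [].
Qed.

Lemma sum_build n k (hub : 'I_k) (g : nat -> 'I_k) :
  \sum_(v : option (bool * 'I_n))
    ([ffun v : option (bool * 'I_n) => if v is Some (_, i) then g (nat_of_ord i) else hub] v : 'I_k).+1
  = hub.+1 + 2 * \sum_(i < n) (g i).+1.
Proof.
rewrite big_dw !ffunE /=; congr (_ + _).
rewrite mul2n -addnn; congr (_ + _); apply: eq_bigr => i _; by rewrite ffunE.
Qed.

Lemma sum_odd1 m : \sum_(i < m) (odd i).+1 = m./2 + m.
Proof.
elim: m => [|m IH]; first by rewrite big_ord0.
rewrite big_ord_recr /= IH.
have := uphalf_half m; rewrite /= => ->.
case: (odd m) => /=; slia.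
Qed.

Definition g_odd n (m : nat) : 'I_4 := inord (if m == n.-1 then 2 else odd m).
Definition g_even (m : nat) : 'I_3 := inord (odd m).

Lemma g_odd_ok n : 3 <= n ->
  [/\ forall m, (inord 3 : 'I_4) != g_odd n m,
      forall m, m.+1 < n -> g_odd n m != g_odd n m.+1 & g_odd n n.-1 != g_odd n 0].
Proof.
move=> hn; split.
- move=> x; rewrite /g_odd; apply: inord_neq => //; case: ifP => _ //; by case: (odd x).
- move=> x hx; rewrite /g_odd.
  have -> : (x == n.-1) = false by apply/negbTE; slia.
  apply: inord_neq; first by case: (odd x).
    by case: ifP => _ //; case: (odd x.+1).
  case: ifP => _; first by case: (odd x).
  by rewrite /=; case: (odd x).
- have e : (0 == n.-1) = false by apply/negbTE; slia.
  by rewrite /g_odd eqxx e; apply: inord_neq.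
Qed.



Lemma g_even_ok n : 3 <= n -> ~~ odd n ->
  [/\ forall m, (inord 2 : 'I_3) != g_even m,
      forall m, m.+1 < n -> g_even m != g_even m.+1 & g_even n.-1 != g_even 0].
Proof.
move=> hn he; split.
- by move=> x; apply: inord_neq => //; case: odd.
- by move=> x hx; apply: inord_neq => //=; case: odd.
- apply: inord_neq => //; first by case: odd.
  move: he; case: n hn => // n' _ /=.
  by case: odd.
Qed.

Lemma sum_odd_val n : 3 <= n -> odd n -> \sum_(i < n) (g_odd n i).+1 = (3 * n + 3) %/ 2.
Proof.
case: n => // m hm ho.
rewrite big_ord_recr /=.
have -> : \sum_(i < m) (g_odd m.+1 (widen_ord (leqnSn m) i)).+1 = \sum_(i < m) (odd i).+1.
  apply: eq_bigr => i _.
  have e : (nat_of_ord i == m) = false by apply/negbTE; have := ltn_ord i; slia.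
  rewrite /g_odd /= e inordK //; by case: odd.
rewrite sum_odd1 /g_odd /= eqxx inordK //.
have := odd_double_half m; move: ho => /= /negbTE ->; rewrite add0n -muln2 => E.
rewrite -{2 3}E; slia.
Qed.

Lemma sum_even_val n : ~~ odd n -> \sum_(i < n) (g_even i).+1 = n./2 + n.
Proof.
move=> he; rewrite -sum_odd1; apply: eq_bigr => i _.
by rewrite /g_even inordK //; case: odd.
Qed.

Lemma chi_dw n (hn : 3 <= n) :
  chromatic_number (dw_adj_irr n) = if odd n then 4 else 3.
Proof.
rewrite /chromatic_number; case: ex_minnP => m /existsP [c Hc] Hmin.
apply/eqP; rewrite eqn_leq; apply/andP; split.
- case: ifP => ho; apply: Hmin; apply/existsP.
  + have [h1 h2 h3] := g_odd_ok hn.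
    by exists [ffun v => if v is Some (_, i) then g_odd n (nat_of_ord i) else inord 3];
      apply: proper_build.
  + have [h1 h2 h3] := g_even_ok hn (negbT ho).
    by exists [ffun v => if v is Some (_, i) then g_even (nat_of_ord i) else inord 2];
      apply: proper_build.
- case: ifP => ho; [exact: chi_lb4 hn ho Hc | exact: chi_lb3 hn Hc].
Qed.

Theorem proposition2p1 (n : nat) (hn : 3 <= n) :
  chi_chromatic_sum (dw_adj_irr n) = (if odd n then 3 * n + 7 else 3 * (n + 1)).
Proof.
rewrite /chi_chromatic_sum; case: ex_minnP => s Hs Hmin.
move: Hs Hmin; rewrite (chi_dw hn).
case: ifP => ho /existsP [c /andP [Hc /eqP ->]] Hmin; apply/eqP; rewrite eqn_leq; apply/andP; split.
- apply: Hmin; apply/existsP.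
  have [h1 h2 h3] := g_odd_ok hn.
  exists [ffun v => if v is Some (_, i) then g_odd n (nat_of_ord i) else inord 3].
  rewrite proper_build //= sum_build sum_odd_val // inordK //.
  have := odd_double_half n; rewrite ho -muln2 => E.
  apply/eqP; rewrite -{1 2}E; slia.
- exact: lb_odd.
- apply: Hmin; apply/existsP.
  have [h1 h2 h3] := g_even_ok hn (negbT ho).
  exists [ffun v => if v is Some (_, i) then g_even (nat_of_ord i) else inord 2].
  rewrite proper_build //= sum_build sum_even_val ?ho // inordK //.
  have := odd_double_half n; rewrite ho -muln2 => E.
  apply/eqP; rewrite -{1 2}E; slia.
- exact: lb_even.
Qed.
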